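(* Consider a convex $n$-gon with vertices $0,\dots,n-1$ in cyclic order, and integers $0<a<b<c<n-1$. Let $V_R=\{0,\dots,a-1\}$, $V_B=\{a,\dots,b-1\}$, $V_L=\{b,\dots,c-1\}$, $V_T=\{c,\dots,n-1\}$. Let $B_Q$ be the set of all edges $(i,j)$ with $i\in V_R$, $j\in V_L$, together with all edges $(i,j)$ with $i\in V_T$, $j\in V_B$. Then $B_Q$ is an $(n,m)$-blocker with $m=|V_R|\cdot|V_L|+|V_T|\cdot|V_B|$.
   Context: An edge $(i,j)$ is the segment between vertices $i,j$; boundary edges are $(i,i+1)$ (indices mod $n$), diagonals are the other edges. Two edges cross if they share an interior point. A triangulation is a maximal set of pairwise non-crossing diagonals. A blocker is a set $B$ of diagonals having a diagonal in common with every triangulation; it is saturated if for every $e\in B$, $B\setminus\{e\}$ is not a blocker. An $(n,k)$-blocker is a saturated blocker of size $k$ for a convex $n$-gon. *)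

(* Defs.v *)
(* Convex n-gon with vertices 'I_n in cyclic order. *)
From mathcomp Require Import all_boot.
Set Implicit Arguments. Unset Strict Implicit. Unset Printing Implicit Defensive.

Definition edge n := {set 'I_n}.

Definition is_edge n (e : edge n) : bool := #|e| == 2.

Definition is_boundary n (e : edge n) : bool :=
  [exists i : 'I_n, exists j : 'I_n,
     (e == [set i; j]) && (val j == (val i).+1 %% n)].

Definition is_diagonal n (e : edge n) : bool := is_edge e && ~~ is_boundary e.

(* In a convex polygon, two edges share an interior point iff their
   endpoints strictly interleave in the cyclic order. *)
Definition crossing n (e f : edge n) : bool :=
  [exists i : 'I_n, exists j : 'I_n, exists k : 'I_n, exists l : 'I_n,
     [&& ((e == [set i; j]) && (f == [set k; l]) || (f == [set i; j]) && (e == [set k; l])),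
         val i < val k, val k < val j & val j < val l]].

Definition triangulation n (T : {set edge n}) : bool :=
  [&& [forall d in T, is_diagonal d],
      [forall d in T, forall d' in T, ~~ crossing d d'] &
      [forall d, (is_diagonal d && (d \notin T)) ==> [exists d' in T, crossing d d']]].

Definition blocker n (B : {set edge n}) : bool :=
  [forall d in B, is_diagonal d] &&
  [forall T : {set edge n}, triangulation T ==> [exists d in B, d \in T]].

Definition saturated n (B : {set edge n}) : bool :=
  [forall e in B, ~~ blocker (B :\ e)].

Definition nk_blocker (n k : nat) (B : {set edge n}) : bool :=
  [&& blocker B, saturated B & #|B| == k].

(* B_Q: edges (i,j) with i in V_R = [0,a), j in V_L = [b,c),
   and edges (i,j) with i in V_T = [c,n), j in V_B = [a,b). *)
Definition BQ n a b c : {set edge n} :=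
  [set e : edge n | [exists i : 'I_n, exists j : 'I_n,
     (e == [set i; j]) &&
     (((val i < a) && (b <= val j < c)) || ((c <= val i) && (a <= val j < b)))]].
Arguments nk_blocker : clear implicits.

(* Main.v *)
Require Import Defs.
From mathcomp Require Import all_boot zify.
Set Implicit Arguments. Unset Strict Implicit. Unset Printing Implicit Defensive.

Lemma set2_in (n : nat) (x y i : 'I_n) : i \in [set x; y] -> (i = x :> nat) \/ (i = y :> nat).
Proof. by rewrite !inE => /orP[/eqP->|/eqP->]; [left|right]. Qed.

Lemma set2_eqE n (x y u v : 'I_n) :
  ([set x; y] == [set u; v]) =
  ((x == u :> nat) && (y == v :> nat)) || ((x == v :> nat) && (y == u :> nat)).
Proof.
apply/eqP/idP.
- move=> E.
  have hx : x \in [set u; v] by rewrite -E !inE eqxx.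
  have hy : y \in [set u; v] by rewrite -E !inE eqxx orbT.
  have hu : u \in [set x; y] by rewrite E !inE eqxx.
  have hv : v \in [set x; y] by rewrite E !inE eqxx orbT.
  move: (set2_in hx) (set2_in hy) (set2_in hu) (set2_in hv); lia.
- move=> /orP[/andP[/eqP/val_inj-> /eqP/val_inj->]|/andP[/eqP/val_inj-> /eqP/val_inj->]] //.
  by rewrite setUC.
Qed.

Definition cr (x y u v : nat) := ((x < u) && (u < y) && (y < v)) || ((u < x) && (x < v) && (v < y)).

Lemma crossingE n (x y u v : 'I_n) : x < y -> u < v ->
  crossing [set x; y] [set u; v] = cr x y u v.
Proof.
rewrite /cr => xy uv; apply/existsP/idP.
- case=> i /existsP[j /existsP[k /existsP[l /and4P[H1 H2 H3 H4]]]].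
  move: H1 => /orP[/andP[E1 E2]|/andP[E1 E2]].
  + rewrite set2_eqE in E1; rewrite set2_eqE in E2; move: H2 H3 H4 => /= H2 H3 H4; lia.
  + rewrite set2_eqE in E1; rewrite set2_eqE in E2; move: H2 H3 H4 => /= H2 H3 H4; lia.
- move=> /orP[/andP[/andP[h1 h2] h3]|/andP[/andP[h1 h2] h3]].
  + exists x; apply/existsP; exists y; apply/existsP; exists u; apply/existsP; exists v.
    by rewrite /= !eqxx h1 h2 h3.
  + exists u; apply/existsP; exists v; apply/existsP; exists x; apply/existsP; exists y.
    by rewrite /= !eqxx h1 h2 h3 orbT.
Qed.

Definition crm (x y u v : nat) := cr (minn x y) (maxn x y) (minn u v) (maxn u v).

Lemma crossing2 n (x y u v : 'I_n) : x != y :> nat -> u != v :> nat ->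
  crossing [set x; y] [set u; v] = crm x y u v.
Proof.
rewrite /crm => xy uv.
case: (ltngtP x y) => hxy; last by move: xy; rewrite hxy eqxx.
- case: (ltngtP u v) => huv; last by move: uv; rewrite huv eqxx.
  + rewrite crossingE //; rewrite /cr; apply/idP/idP; lia.
  + rewrite [[set u; v]]setUC crossingE //; rewrite /cr; apply/idP/idP; lia.
- case: (ltngtP u v) => huv; last by move: uv; rewrite huv eqxx.
  + rewrite [[set x; y]]setUC crossingE //; rewrite /cr; apply/idP/idP; lia.
  + rewrite [[set x; y]]setUC [[set u; v]]setUC crossingE //; rewrite /cr; apply/idP/idP; lia.
Qed.

Lemma modS n (i : 'I_n) : (i.+1 %% n) = if i.+1 == n then 0 else i.+1.
Proof.
case: eqP => [E|ne]; first by rewrite E modnn.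
rewrite modn_small //; have := ltn_ord i; lia.
Qed.

Definition bd n (x y : nat) := (maxn x y == (minn x y).+1) || ((minn x y == 0) && (maxn x y == n.-1)).

Lemma boundaryE n (x y : 'I_n) : x != y :> nat -> is_boundary [set x; y] = bd n x y.
Proof.
rewrite /bd => xy; have := ltn_ord x; have := ltn_ord y => hy hx.
apply/existsP/idP.
- case=> i /existsP[j /andP[E F]]; move: F; rewrite /= modS; rewrite set2_eqE in E.
  have := ltn_ord i; have := ltn_ord j.
  case: (i.+1 =P n) => h; lia.
- case: (ltngtP x y) => hxy; last by move: xy; rewrite hxy eqxx.
  + move=> H.
    have [Hs|Hs] : (y == x.+1 :> nat) \/ ((x == 0 :> nat) && (y == n.-1 :> nat)) by lia.
    * exists x; apply/existsP; exists y; rewrite eqxx /= modS; case: (x.+1 =P n) => h; lia.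
    * exists y; apply/existsP; exists x; rewrite set2_eqE /= modS; case: (y.+1 =P n) => h; lia.
  + move=> H.
    have [Hs|Hs] : (x == y.+1 :> nat) \/ ((y == 0 :> nat) && (x == n.-1 :> nat)) by lia.
    * exists y; apply/existsP; exists x; rewrite set2_eqE /= modS; case: (y.+1 =P n) => h; lia.
    * exists x; apply/existsP; exists y; rewrite eqxx /= modS; case: (x.+1 =P n) => h; lia.
Qed.

Lemma edgeE n (x y : 'I_n) : is_edge [set x; y] = (x != y :> nat).
Proof. rewrite /is_edge cards2 eqSS; have -> : (x != y :> nat) = (x != y) by []. by case: (x != y). Qed.

Lemma diagE n (x y : 'I_n) : is_diagonal [set x; y] = (x != y :> nat) && ~~ bd n x y.
Proof.
rewrite /is_diagonal edgeE; case: eqP => //= /eqP h; by rewrite boundaryE.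
Qed.

Lemma edge_split n (e : edge n) : is_edge e -> exists x y : 'I_n, x < y /\ e = [set x; y].
Proof.
move=> /cards2P[x [y [xy ->]]].
case: (ltngtP x y) => h; first by exists x, y.
- by exists y, x; rewrite setUC.
- by move: xy; rewrite (val_inj h) eqxx.
Qed.


Definition bdo n (u v : nat) := (v == u.+1) || ((u == 0) && (v == n.-1)).

Lemma diagO n (x y : 'I_n) : x < y -> is_diagonal [set x; y] = ~~ bdo n x y.
Proof. move=> xy; rewrite diagE /bd /bdo; apply/idP/idP; lia. Qed.

Lemma tri_diag n (T : {set edge n}) d : triangulation T -> d \in T -> is_diagonal d.
Proof. by case/and3P => /forallP H _ _ dT; have := H d; rewrite dT. Qed.

Lemma tri_nc n (T : {set edge n}) d d' : triangulation T -> d \in T -> d' \in T -> ~~ crossing d d'.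
Proof. by case/and3P => _ /forall_inP H _ dT d'T; have /forall_inP := H d dT; apply. Qed.

Lemma tri_max n (T : {set edge n}) d : triangulation T -> is_diagonal d -> d \notin T ->
  exists2 d', d' \in T & crossing d d'.
Proof.
case/and3P => _ _ /forallP H dd dT; have := H d; rewrite dd dT /= => /exists_inP[d' ? ?].
by exists d'.
Qed.

Lemma tri_split n (T : {set edge n}) d : triangulation T -> d \in T ->
  exists x y : 'I_n, x < y /\ d = [set x; y].
Proof. move=> tT dT; apply: edge_split; by case/andP: (tri_diag tT dT). Qed.

Lemma kill n (T : {set edge n}) (x y u v : 'I_n) : triangulation T ->
  [set x; y] \in T -> [set u; v] \in T -> x < y -> u < v -> ~~ cr x y u v.
Proof. move=> tT h1 h2 xy uv; rewrite -crossingE //; exact: tri_nc tT h1 h2. Qed.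

Lemma crossing_sym n (e f : edge n) : crossing e f = crossing f e.
Proof.
rewrite /crossing; apply/existsP/existsP => -[i /existsP[j /existsP[k /existsP[l H]]]];
exists i; apply/existsP; exists j; apply/existsP; exists k; apply/existsP; exists l;
by move: H; rewrite orbC.
Qed.

Lemma crossing_irr n (d : edge n) : is_edge d -> ~~ crossing d d.
Proof. move=> /edge_split[x [y [xy ->]]]; rewrite crossingE // /cr; lia. Qed.

Definition ncset n (S : {set edge n}) :=
  [forall d in S, is_diagonal d] && [forall d in S, forall d' in S, ~~ crossing d d'].

Lemma extend n (S : {set edge n}) : ncset S -> exists2 T, triangulation T & S \subset T.
Proof.
move=> HS.
pose P := fun T : {set edge n} => (S \subset T) && ncset T.
have PS : P S by rewrite /P subxx HS.
case: (@arg_maxnP _ S P (fun T : {set edge n} => #|T|) PS) => T /andP[ST /andP[/forall_inP Td /forall_inP Tn]] Tmax.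
exists T => //.
apply/and3P; split.
- by apply/forall_inP.
- by apply/forall_inP.
- apply/forallP => d; apply/implyP => /andP[dd dT].
  case: (boolP [exists d' in T, crossing d d']) => // /exists_inPn Hn'.
  have : P (d |: T).
    rewrite /P; apply/andP; split; first by apply: subset_trans ST (subsetUr _ _).
    apply/andP; split.
    + by apply/forall_inP => d'; rewrite in_setU1 => /orP[/eqP->|/Td].
    + apply/forall_inP => d1; rewrite in_setU1 => /orP[/eqP->|h1];
      apply/forall_inP => d2; rewrite in_setU1 => /orP[/eqP->|h2].
      * by apply: crossing_irr; case/andP: dd.
      * exact: Hn'.
      * by rewrite crossing_sym; apply: Hn'.
      * by have /forall_inP := Tn d1 h1; apply.
  move=> /Tmax; rewrite cardsU1 dT /=; lia.
Qed.


Definition Peb n (T : {set edge n}) (x y : 'I_n) : bool :=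
  (x < y) && (([set x; y] \in T) || (y == x.+1 :> nat) || ((x == 0 :> nat) && (y == n.-1 :> nat))).

Lemma noncross_Pe n (T : {set edge n}) (x y u v : 'I_n) : triangulation T -> Peb T x y ->
  [set u; v] \in T -> u < v -> ~~ cr x y u v.
Proof.
move=> tT /andP[xy /orP[/orP[H|H]|H]] uT uv; first exact: kill tT H uT xy uv.
- rewrite /cr; lia.
- have := ltn_ord v; rewrite /cr; lia.
Qed.

Lemma triangle n (T : {set edge n}) (x y : 'I_n) : triangulation T -> Peb T x y -> x.+2 <= y ->
  exists z : 'I_n, [/\ x < z, z < y, Peb T x z & Peb T z y].
Proof.
move=> tT Pxy x2y.
have z0lt : x.+1 < n by have := ltn_ord y; lia.
pose z0 := Ordinal z0lt.
have Pz0 : (x < z0 < y) && Peb T x z0.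
  rewrite /Peb /=; apply/andP; split; first by lia.
  by rewrite eqxx /= orbT andbT; lia.
case: (@arg_maxnP _ z0 (fun z : 'I_n => (x < z < y) && Peb T x z) (fun z : 'I_n => nat_of_ord z) Pz0)
  => z /andP[/andP[xz zy] Pxz] zmax.
exists z; split => //.
rewrite /Peb zy /=.
case: (boolP (y == z.+1 :> nat)) => [H|ny]; first by apply/orP; left; apply/orP; right.
case: (boolP ([set z; y] \in T)) => // zyT.
have dd : is_diagonal [set z; y] by rewrite diagO // /bdo; lia.
case: (tri_max tT dd zyT) => d' d'T.
case: (tri_split tT d'T) => u [v [uv Ed']]; subst d'.
rewrite crossingE // => Hc.
have nc1 := noncross_Pe tT Pxy d'T uv.
have nc2 := noncross_Pe tT Pxz d'T uv.
have m : (u == x :> nat) -> v <= z.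
  move=> /eqP ux; have ux' : u = x := val_inj ux.
  have := zmax v; rewrite /=; apply.
  rewrite /Peb -ux' d'T /=; apply/andP; split; last by rewrite uv.
  move: Hc; rewrite /cr; lia.
move: Hc nc1 nc2 m; rewrite /cr; lia.
Qed.

Lemma blocker_ind n (a b c : nat) (T : {set edge n}) : 0 < a -> a < b -> b < c -> c < n.-1 ->
  triangulation T -> forall k (x y : 'I_n), y - x <= k -> Peb T x y -> x < a -> c <= y ->
  [exists d in BQ n a b c, d \in T].
Proof.
move=> a0 ab bc cn tT; elim=> [|k IH] x y hk Pxy xa cy; first by lia.
have [z [xz zy Pxz Pzy]] := triangle tT Pxy ltac:(lia).
case: (ltnP z a) => za; first by apply: (IH z y) => //; lia.
case: (ltnP z b) => zb.
  apply/exists_inP; exists [set z; y].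
    rewrite setUC inE; apply/existsP; exists y; apply/existsP; exists z; rewrite eqxx /=; lia.
  by move: Pzy; rewrite /Peb; case/andP => _ /orP[/orP[//|]|]; lia.
case: (ltnP z c) => zc.
  apply/exists_inP; exists [set x; z].
    rewrite inE; apply/existsP; exists x; apply/existsP; exists z; rewrite eqxx /=; lia.
  by move: Pxz; rewrite /Peb; case/andP => _ /orP[/orP[//|]|]; lia.
by apply: (IH x z) => //; lia.
Qed.

Lemma BQ_split n a b c (d : edge n) : d \in BQ n a b c -> exists x y : 'I_n, d = [set x; y] /\
  (((x < a) && (b <= y < c)) || ((a <= x < b) && (c <= y))).
Proof.
rewrite inE => /existsP[i /existsP[j /andP[/eqP -> /= H]]].
case/orP: H => H; first by exists i, j; rewrite H.
by exists j, i; rewrite setUC; split => //; apply/orP; right; lia.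
Qed.

Lemma BQ_blocker n a b c : 0 < a -> a < b -> b < c -> c < n.-1 -> blocker (BQ n a b c).
Proof.
move=> a0 ab bc cn; apply/andP; split.
- apply/forall_inP => d /BQ_split[x [y [-> H]]]; rewrite diagE /bd.
  have := ltn_ord x; have := ltn_ord y; lia.
- apply/forallP => T; apply/implyP => tT.
  have h0 : 0 < n by lia.
  have h1 : n.-1 < n by lia.
  apply: (blocker_ind a0 ab bc cn tT (k := n) (x := Ordinal h0) (y := Ordinal h1)) => /=; try lia.
  rewrite /Peb /= eqxx /= !orbT andbT; lia.
Qed.


Definition Sof n (L : seq (edge n)) : {set edge n} := [set d | is_diagonal d && (d \in L)].

Lemma inS n (L : seq (edge n)) (u v : 'I_n) : u < v -> ~~ bdo n u v -> [set u; v] \in L ->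
  [set u; v] \in Sof L.
Proof. by move=> uv hb hl; rewrite inE diagO // hb hl. Qed.

Lemma Sof_diag n (L : seq (edge n)) : [forall d in Sof L, is_diagonal d].
Proof. by apply/forall_inP => d; rewrite inE => /andP[]. Qed.

Lemma sat_gen n a b c (L : seq (edge n)) (e : edge n) : a < b -> b < c ->
  ncset (Sof L) ->
  (forall T, triangulation T -> Sof L \subset T -> forall x y : 'I_n, x < y ->
     (((x < a) && (b <= y < c)) || ((a <= x < b) && (c <= y))) -> [set x; y] != e ->
     [set x; y] \notin T) ->
  ~~ blocker (BQ n a b c :\ e).
Proof.
move=> ab bc nc H; case: (extend nc) => T tT ST.
rewrite /blocker negb_and; apply/orP; right; apply/negP => /forallP/(_ T); rewrite tT /=.
case/exists_inP => d; rewrite in_setD1 => /andP[dne /BQ_split[x [y [Ed Hc]]]] dT; subst d.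
case: (ltngtP x y) => xy.
- by move: dT; apply/negP; apply: H => //.
- move: Hc; lia.
- move: Hc; lia.
Qed.

Lemma mem5 (T : eqType) (x a1 a2 a3 a4 a5 : T) : x \in [:: a1; a2; a3; a4; a5] ->
  x = a1 \/ x = a2 \/ x = a3 \/ x = a4 \/ x = a5.
Proof. by rewrite !inE => /orP[/eqP->|/orP[/eqP->|/orP[/eqP->|/orP[/eqP->|/eqP->]]]]; auto. Qed.

Lemma sat1 n a b c (i j : 'I_n) : 0 < a -> a < b -> b < c -> c < n.-1 ->
  i < a -> b <= j < c -> ~~ blocker (BQ n a b c :\ [set i; j]).
Proof.
move=> a0 ab bc cn ia /andP[bj jc].
have qlt : b.-1 < n by lia.
have slt : c < n by lia.
pose q := Ordinal qlt; pose s := Ordinal slt.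
have hq : (q : nat) = b.-1 by [].
have hs : (s : nat) = c by [].
clearbody q s.
pose L := [:: [set i; j]; [set i; s]; [set i; q]; [set q; j]; [set j; s]].
apply: (@sat_gen n a b c L) => //.
- apply/andP; split; first exact: Sof_diag.
  apply/forall_inP => d; rewrite inE => /andP[_ dl]; apply/forall_inP => d'; rewrite inE => /andP[_ dl'].
  case: (mem5 dl) => [->|[->|[->|[->|->]]]]; case: (mem5 dl') => [->|[->|[->|[->|->]]]];
  rewrite crossingE /cr; lia.
- move=> T tT ST x y xy Hc hne.
  apply/negP => dT.
  have K : forall u v : 'I_n, u < v -> ~~ bdo n u v -> [set u; v] \in L -> ~~ cr x y u v.
    by move=> u v uv hb hl; apply: kill tT dT (subsetP ST _ (inS uv hb hl)) xy uv.
  have k1 : i < j -> ~~ bdo n i j -> ~~ cr x y i j by move=> h1 h2; apply: K => //; rewrite !inE eqxx ?orbT.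
  have k2 : i < s -> ~~ bdo n i s -> ~~ cr x y i s by move=> h1 h2; apply: K => //; rewrite !inE eqxx ?orbT.
  have k3 : i < q -> ~~ bdo n i q -> ~~ cr x y i q by move=> h1 h2; apply: K => //; rewrite !inE eqxx ?orbT.
  have k4 : q < j -> ~~ bdo n q j -> ~~ cr x y q j by move=> h1 h2; apply: K => //; rewrite !inE eqxx ?orbT.
  have k5 : j < s -> ~~ bdo n j s -> ~~ cr x y j s by move=> h1 h2; apply: K => //; rewrite !inE eqxx ?orbT.
  move: hne; rewrite set2_eqE => hne.
  have yn := ltn_ord y.
  case/orP: Hc => /andP[hx hy]; last first.
    by move: k1; clear k2 k3 k4 k5 K; rewrite /bdo /cr; lia.
  case: (ltngtP x i) => xi.
  - by move: k2; clear k1 k3 k4 k5 K; rewrite /bdo /cr; lia.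
  - by move: k3; clear k1 k2 k4 k5 K; rewrite /bdo /cr; lia.
  case: (ltngtP y j) => yj.
  - by move: k4; clear k1 k2 k3 k5 K; rewrite /bdo /cr; lia.
  - by move: k5; clear k1 k2 k3 k4 K; rewrite /bdo /cr; lia.
  - by clear k1 k2 k3 k4 k5 K; move: hne; lia.
Qed.

Lemma sat2 n a b c (k t : 'I_n) : 0 < a -> a < b -> b < c -> c < n.-1 ->
  a <= k < b -> c <= t -> ~~ blocker (BQ n a b c :\ [set k; t]).
Proof.
move=> a0 ab bc cn /andP[ak kb] ct.
have plt : 0 < n by lia.
have rlt : c.-1 < n by lia.
pose p := Ordinal plt; pose r := Ordinal rlt.
have hp : (p : nat) = 0 by [].
have hr : (r : nat) = c.-1 by [].
clearbody p r.
pose L := [:: [set k; t]; [set r; t]; [set p; t]; [set p; k]; [set k; r]].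
apply: (@sat_gen n a b c L) => //.
- apply/andP; split; first exact: Sof_diag.
  apply/forall_inP => d; rewrite inE => /andP[_ dl]; apply/forall_inP => d'; rewrite inE => /andP[_ dl'].
  case: (mem5 dl) => [->|[->|[->|[->|->]]]]; case: (mem5 dl') => [->|[->|[->|[->|->]]]];
  rewrite crossingE /cr; lia.
- move=> T tT ST x y xy Hc hne.
  apply/negP => dT.
  have K : forall u v : 'I_n, u < v -> ~~ bdo n u v -> [set u; v] \in L -> ~~ cr x y u v.
    by move=> u v uv hb hl; apply: kill tT dT (subsetP ST _ (inS uv hb hl)) xy uv.
  have k1 : k < t -> ~~ bdo n k t -> ~~ cr x y k t by move=> h1 h2; apply: K => //; rewrite !inE eqxx ?orbT.
  have k2 : r < t -> ~~ bdo n r t -> ~~ cr x y r t by move=> h1 h2; apply: K => //; rewrite !inE eqxx ?orbT.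
  have k3 : p < t -> ~~ bdo n p t -> ~~ cr x y p t by move=> h1 h2; apply: K => //; rewrite !inE eqxx ?orbT.
  have k4 : p < k -> ~~ bdo n p k -> ~~ cr x y p k by move=> h1 h2; apply: K => //; rewrite !inE eqxx ?orbT.
  have k5 : k < r -> ~~ bdo n k r -> ~~ cr x y k r by move=> h1 h2; apply: K => //; rewrite !inE eqxx ?orbT.
  move: hne; rewrite set2_eqE => hne.
  have yn := ltn_ord y.
  case/orP: Hc => /andP[hx hy].
    by move: k1; clear k2 k3 k4 k5 K; rewrite /bdo /cr; lia.
  case: (ltngtP x k) => xk.
  - by move: k4; clear k1 k2 k3 k5 K; rewrite /bdo /cr; lia.
  - by move: k5; clear k1 k2 k3 k4 K; rewrite /bdo /cr; lia.
  case: (ltngtP y t) => yt.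
  - by move: k2; clear k1 k3 k4 k5 K; rewrite /bdo /cr; lia.
  - by move: k3; clear k1 k2 k4 k5 K; rewrite /bdo /cr; lia.
  - by clear k1 k2 k3 k4 k5 K; move: hne; lia.
Qed.

Lemma BQ_saturated n a b c : 0 < a -> a < b -> b < c -> c < n.-1 -> saturated (BQ n a b c).
Proof.
move=> a0 ab bc cn; apply/forall_inP => e /BQ_split[x [y [-> /orP[/andP[h1 h2]|/andP[h1 h2]]]]].
- exact: sat1.
- exact: sat2.
Qed.


Lemma cnt n (P : pred nat) : #|[set i : 'I_n | P i]| = count P (iota 0 n).
Proof.
rewrite cardsE cardE -val_enum_ord count_map size_filter enumT.
by apply: eq_count.
Qed.

Lemma card_range n lo hi : lo <= hi -> hi <= n ->
  #|[set i : 'I_n | lo <= i < hi]| = hi - lo.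
Proof.
move=> lh hn.
rewrite (cnt n (fun i => lo <= i < hi)).
have -> : n = lo + ((hi - lo) + (n - hi)) by lia.
rewrite !iotaD !count_cat.
rewrite (@eq_in_count _ _ pred0); last by move=> x; rewrite mem_iota /=; lia.
rewrite (@eq_in_count _ _ predT (iota (0 + lo) (hi - lo))); last by move=> x; rewrite mem_iota /=; lia.
rewrite (@eq_in_count _ _ pred0 (iota _ (_ - hi))); last by move=> x; rewrite mem_iota /=; lia.
by rewrite !count_pred0 count_predT size_iota add0n addn0.
Qed.

Lemma BQ_card n a b c : 0 < a -> a < b -> b < c -> c < n.-1 ->
  #|BQ n a b c| = a * (c - b) + (n - c) * (b - a).
Proof.
move=> a0 ab bc cn.
pose R1 := [set i : 'I_n | 0 <= i < a]; pose L1 := [set i : 'I_n | b <= i < c].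
pose T1 := [set i : 'I_n | c <= i < n]; pose B1 := [set i : 'I_n | a <= i < b].
pose A := setX R1 L1 :|: setX T1 B1.
pose f := fun p : 'I_n * 'I_n => [set p.1; p.2].
have memA : forall p : 'I_n * 'I_n, (p \in A) =
   ((p.1 < a) && (b <= p.2 < c)) || ((c <= p.1) && (a <= p.2 < b)).
  move=> [p1 p2]; rewrite !inE /=; have h := ltn_ord p1; apply/idP/idP; lia.
have -> : BQ n a b c = f @: A.
  apply/setP => e; apply/idP/imsetP.
  - rewrite inE => /existsP[i /existsP[j /andP[/eqP -> H]]].
    by exists (i, j); rewrite // memA.
  - case=> [[i j]]; rewrite memA /= => H ->.
    by rewrite inE; apply/existsP; exists i; apply/existsP; exists j; rewrite eqxx.
rewrite card_in_imset; last first.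
  move=> [p1 p2] [q1 q2]; rewrite !memA /= => hp hq /eqP.
  rewrite /f /= set2_eqE => H.
  have [e1 e2] : p1 = q1 /\ p2 = q2.
    by split; apply: val_inj => /=; move: hp hq H; lia.
  by rewrite e1 e2.
rewrite cardsU.
have -> : setX R1 L1 :&: setX T1 B1 = set0.
  apply/setP => -[p1 p2]; rewrite !inE /=; lia.
rewrite cards0 subn0 !cardsX.
rewrite /R1 /L1 /T1 /B1 !card_range //; lia.
Qed.

Theorem proposition3p1 (n a b c : nat) :
  0 < a -> a < b -> b < c -> c < n.-1 ->
  nk_blocker n (a * (c - b) + (n - c) * (b - a)) (BQ n a b c).
Proof.
move=> a0 ab bc cn.
by rewrite /nk_blocker BQ_blocker // BQ_saturated // BQ_card // eqxx.
Qed.
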